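(* Let $z_1,\dots,z_N$ be independent with $z_i\sim\mathrm{Bernoulli}(q_i)$, $0<q_i<1$ for every $i\in[N]$, and let $S=\sum_{i=1}^Nz_i$. If $\max_{i\in[N]}q_i<1-\frac1N$, then $\Pr\{S<N\max_{i\in[N]}q_i\}>\frac14$. *)

(* Defs.v *)
From mathcomp Require Import all_boot all_order all_algebra.
Set Implicit Arguments. Unset Strict Implicit. Unset Printing Implicit Defensive.
Import Order.TTheory GRing.Theory Num.Theory.
Local Open Scope ring_scope.

(* Joint law of independent Bernoulli(q i) variables z_1..z_N: the probability
   of an outcome b (b i = value of z_i) is the product of the marginals. *)
Definition bern_weight (R : numDomainType) (N : nat) (q : 'I_N -> R)
    (b : {ffun 'I_N -> bool}) : R :=
  \prod_(i < N) (if b i then q i else 1 - q i).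

Definition bern_prob (R : numDomainType) (N : nat) (q : 'I_N -> R)
    (A : pred {ffun 'I_N -> bool}) : R :=
  \sum_(b : {ffun 'I_N -> bool} | A b) bern_weight q b.

Definition bern_sum (N : nat) (b : {ffun 'I_N -> bool}) : nat :=
  \sum_(i < N) (b i : nat).

(* max_i q_i  (all q_i > 0 in the theorem, so the seed 0 is harmless) *)
Definition qmax (R : realDomainType) (N : nat) (q : 'I_N -> R) : R :=
  \big[Num.max/0]_(i < N) q i.

(* Main.v *)
Require Import Defs.
From mathcomp Require Import all_boot all_order all_algebra.
From mathcomp Require Import ring lra zify.
Set Implicit Arguments. Unset Strict Implicit. Unset Printing Implicit Defensive.
Import Order.TTheory GRing.Theory Num.Theory.
Lemma bern_y y m : (y ^ m * (y + m) <= y * (y + 1) ^ m)%N.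
Proof.
elim: m => [|m IH]; first by rewrite !expn0 mul1n muln1 addn0.
rewrite !expnS.
set Y := y ^ m in IH *; set Z := (y + 1) ^ m in IH *.
nia.
Qed.

Lemma keyK n : (0 < n)%N ->
  (n.+2 ^ n.+2 * n ^ n.+1 <= n.+1 ^ n.+2 * n.+1 ^ n.+1)%N.
Proof.
move=> n0.
have h := bern_y (n * n.+2) n.+1.
have e1 : (n * n.+2 + 1 = n.+1 * n.+1)%N by lia.
rewrite e1 !expnMn in h.
rewrite [n.+2 ^ n.+2]expnS [n.+1 ^ n.+2]expnS.
set A := n ^ n.+1 in h *; set B := n.+2 ^ n.+1 in h *; set C := n.+1 ^ n.+1 in h *.
have y0 : (0 < n * n.+2)%N by rewrite muln_gt0 n0.
have h2 : (n.+2 * (n * n.+2) <= n.+1 * (n * n.+2 + n.+1))%N by nia.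
suff : (n * n.+2 * (n.+2 * B * A) <= n * n.+2 * (n.+1 * C * C))%N.
  by rewrite leq_pmul2l.
nia.
Qed.

Lemma bern_nat n : (0 < n)%N -> (n.+1 ^ n.+1 <= 4 * n ^ n.+1)%N /\
   ((1 < n)%N -> (n.+1 ^ n.+1 < 4 * n ^ n.+1)%N).
Proof.
elim: n => [|n IH] // _.
case: n IH => [|n] IH; first by split.
have [IH1 IH2] := IH isT.
have K := @keyK n.+1 isT.
have A0 : (0 < n.+1 ^ n.+2)%N by rewrite expn_gt0.
set X := n.+3 ^ n.+3 in K *; set A := n.+1 ^ n.+2 in K A0 IH1 IH2 *.
set C := n.+2 ^ n.+3 in K *; set D := n.+2 ^ n.+2 in K IH1 IH2 *.
have h1 : (X * A <= 4 * C * A)%N by nia.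
split; first by rewrite leq_pmul2r in h1.
move=> _.
case: n @X @A @C @D IH K A0 IH1 IH2 h1 => [|n] X A C D IH K A0 IH1 IH2 h1.
  by rewrite /X /C.
have h2 : (X * A < 4 * C * A)%N by move: (IH2 isT); nia.
by rewrite ltn_pmul2r in h2.
Qed.

Local Open Scope ring_scope.

Section Poly.
Variable R : realFieldType.
Implicit Types (A : {poly R}) (r : R).

Definition g r : {poly R} := (1 - r)%:P + r%:P * 'X.
Definition Fc (c : nat) A : R := \sum_(i < c) A`_i.

Lemma coef_g A r i :
  (A * g r)`_i = (1 - r) * A`_i + (if i is i'.+1 then r * A`_i' else 0).
Proof.
rewrite /g mulrDr coefD mulrA coefMX coefMC coefMC.
by case: i => [|i] /=; rewrite ?mulr0 ?addr0 mulrC // [r * _]mulrC.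
Qed.

Lemma Fc0 A : Fc 0 A = 0. Proof. by rewrite /Fc big_ord0. Qed.
Lemma FcS c A : Fc c.+1 A = Fc c A + A`_c.
Proof. by rewrite /Fc big_ord_recr. Qed.

Lemma Fc_g c A r : Fc c.+1 (A * g r) = Fc c.+1 A - r * A`_c.
Proof.
elim: c => [|c IH].
  by rewrite !FcS !Fc0 coef_g !add0r addr0; ring.
by rewrite FcS IH coef_g [Fc c.+2 A]FcS; ring.
Qed.

Definition nonneg A := forall i, 0 <= A`_i.

Lemma nonneg1 : nonneg 1.
Proof. by move=> i; rewrite coef1; case: (i == 0). Qed.

Lemma nonneg_g A r : nonneg A -> 0 <= r <= 1 -> nonneg (A * g r).
Proof.
move=> hA /andP[r0 r1] i; rewrite coef_g.
have h1 : 0 <= (1 - r) * A`_i by apply: mulr_ge0 => //; rewrite subr_ge0.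
case: i h1 => [|i] h1; first by rewrite addr0.
by apply: addr_ge0 => //; apply: mulr_ge0.
Qed.

Lemma nonneg_gX r n : 0 <= r <= 1 -> nonneg (g r ^+ n).
Proof.
move=> hr; elim: n => [|n IH]; first by rewrite expr0; exact: nonneg1.
by rewrite exprSr; apply: nonneg_g.
Qed.

Lemma dom_step c A r r' : nonneg A -> r <= r' -> Fc c (A * g r') <= Fc c (A * g r).
Proof.
move=> hA hr; case: c => [|c]; first by rewrite !Fc0.
rewrite !Fc_g lerD2l lerN2; apply: ler_wpM2r => //.
Qed.

Lemma dom_strict c A r r' : 0 < A`_c -> r < r' -> Fc c.+1 (A * g r') < Fc c.+1 (A * g r).
Proof.
move=> hA hr; by rewrite !Fc_g ltrD2l ltrN2 ltr_pM2r.
Qed.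

Lemma nonneg_prod n (f : 'I_n -> R) A : nonneg A -> (forall i, 0 <= f i <= 1) ->
  nonneg (A * \prod_(i < n) g (f i)).
Proof.
elim: n f A => [|n IH] f A hA hf; first by rewrite big_ord0 mulr1.
rewrite big_ord_recr /= mulrA; apply: nonneg_g; last exact: hf.
by apply: IH => // i; exact: hf.
Qed.

Lemma dom n c r0 : 0 <= r0 -> forall (f : 'I_n -> R) A, nonneg A ->
  (forall i, r0 <= f i <= 1) ->
  Fc c (A * \prod_(i < n) g (f i)) <= Fc c (A * g r0 ^+ n).
Proof.
move=> h0; elim: n => [|n IH] f A hA hf.
  by rewrite big_ord0 expr0.
rewrite big_ord_recr /= mulrA.
have hf' : forall i : 'I_n, r0 <= f (widen_ord (leqnSn n) i) <= 1 by move=> i; exact: hf.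
have hA' : nonneg (A * \prod_(i < n) g (f (widen_ord (leqnSn n) i))).
  apply: nonneg_prod => // i; case/andP: (hf (widen_ord (leqnSn n) i)) => h1 h2.
  by rewrite h2 (le_trans h0 h1).
have hr : r0 <= f ord_max by case/andP: (hf ord_max).
have hr1 : r0 <= 1 by case/andP: (hf ord_max) => h1 h2; exact: le_trans h2.
apply: (le_trans (dom_step c hA' hr)).
rewrite -mulrA [_ * g r0]mulrC mulrA exprSr mulrA.
rewrite -(mulrA A (g r0 ^+ n)) -exprSr exprS mulrA.
by apply: IH => //; apply: nonneg_g => //; rewrite h0.
Qed.

Definition ratio (m : nat) p A := forall k : nat,
  (k.+1)%:R * (1 - p) * A`_k.+1 <= (m%:R - k%:R) * p * A`_k.

Lemma ratio1 p : 0 <= p -> ratio 0 p 1.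
Proof.
move=> hp [|k]; rewrite !coef1 /= ?mulr0n ?mulr1n ?mulr0 ?subrr ?mul0r //.

Qed.

Lemma ratio_step m p q A : ratio m p A -> nonneg A -> 0 <= q -> q <= p -> p <= 1 ->
  ratio m.+1 p (A * g q).
Proof.
move=> hr hA q0 qp p1 k; rewrite !coef_g.
case: k => [|k].
  have h1 := hr 0%N.
  have h2 : 0 <= (p - q) * A`_0 by apply: mulr_ge0 => //; rewrite subr_ge0.
  have h3 : 0 <= 1 - q by lra.
  have h4 := ler_wpM2l h3 h1.
  rewrite -!natr1 in h4 h1 *.
  rewrite addr0; nra.
have h1 := hr k.+1.
have h1' := hr k.
have h2 : 0 <= (p - q) * A`_k.+1 by apply: mulr_ge0 => //; rewrite subr_ge0.
have h3 : 0 <= 1 - q by lra.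
have h4 := ler_wpM2l h3 h1.
have h5 := ler_wpM2l q0 h1'.
rewrite -!natr1 in h4 h5 *.
nra.
Qed.

Lemma nonneg_ratio_gp p p' a b : 0 <= p' -> p' <= p -> p < 1 ->
  nonneg (g p ^+ a * g p' ^+ b) /\ ratio (a + b) p (g p ^+ a * g p' ^+ b).
Proof.
move=> h0 h1 h2.
have hp0 : 0 <= p by exact: le_trans h1.
elim: b => [|b [IHn IHr]].
  rewrite expr0 mulr1 addn0; elim: a => [|a [IHn IHr]].
    by rewrite expr0; split; [exact: nonneg1 | exact: ratio1].
  rewrite exprSr; split; first by apply: nonneg_g => //; rewrite hp0 ltW.
  by apply: ratio_step => //; exact: ltW.
rewrite exprSr mulrA addnS; split.
  by apply: nonneg_g => //; rewrite h0 (le_trans h1) // ltW.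
by apply: ratio_step => //; exact: ltW.
Qed.

Lemma step_alg (p p' d W0 W1 FW : R) : W1 <= W0 -> 0 <= (d + (p - p')) * p' - d * p ->
  FW - p' * W1 - (d + (p - p')) * ((1 - p') * W1 + p' * W0) <=
  FW - p * W1 - d * ((1 - p) * W1 + p * W0).
Proof.
move=> hW hD.
have h : 0 <= ((d + (p - p')) * p' - d * p) * (W0 - W1).
  by apply: mulr_ge0 => //; rewrite subr_ge0.
nra.
Qed.

Lemma FcWgg j W a b : Fc j.+2 (W * g a * g b) =
  Fc j.+2 W - a * W`_j.+1 - b * ((1 - a) * W`_j.+1 + a * W`_j).
Proof. by rewrite Fc_g Fc_g coef_g. Qed.

Lemma e1_lem (j n' : nat) : j.+1%:R * (1 - j.+1%:R / n'.+1%:R) =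
   (n'%:R - j%:R) * (j.+1%:R / n'.+1%:R) :> R.
Proof.
have h : n'.+1%:R != 0 :> R by rewrite pnatr_eq0.
rewrite -[n'.+1%:R]natr1 in h *; rewrite -natr1; field.
exact: h.
Qed.

Lemma chain1 j n : (0 < j < n)%N ->
  Fc j.+1 (g (j%:R / n.+1%:R) ^+ n.+1) <= Fc j.+1 (g (j%:R / n%:R) ^+ n).
Proof.
case: j => [|j] // /andP[j0 jn].
set p := j.+1%:R / n%:R; set p' := j.+1%:R / n.+1%:R.
have n0 : n%:R != 0 :> R by rewrite pnatr_eq0 -lt0n (leq_trans j0 (ltnW jn)).
have n10 : n.+1%:R != 0 :> R by rewrite pnatr_eq0.
have hp' : 0 <= p' by rewrite /p' divr_ge0 // ler0n.
have hpp : p' <= p.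
  rewrite /p /p' ler_pdivrMr ?ltr0n // mulrAC ler_pdivlMr ?ltr0n ?(leq_trans j0 (ltnW jn)) //.
  by rewrite ler_pM2l ?ltr0n // ler_nat.
have hp1 : p < 1 by rewrite /p ltr_pdivrMr ?ltr0n ?(leq_trans j0 (ltnW jn)) // mul1r ltr_nat.
have he : n%:R * (p - p') = p'.
  by rewrite /p /p'; field; rewrite n0 addrC natr1 n10.
pose Q k := g p ^+ (n - k) * g p' ^+ k * g (k%:R * (p - p')).
have step : forall k, (k < n)%N -> Fc j.+2 (Q k.+1) <= Fc j.+2 (Q k).
  move=> k kn.
  have [hW hR] := nonneg_ratio_gp (n - k.+1) k hp' hpp hp1.
  set W := g p ^+ (n - k.+1) * g p' ^+ k in hW hR.
  have -> : Q k = W * g p * g (k%:R * (p - p')).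
    rewrite /Q /W; congr (_ * _); rewrite -(subnSK kn) exprSr -!mulrA; congr (_ * _); exact: mulrC.
  have -> : Q k.+1 = W * g p' * g (k%:R * (p - p') + (p - p')).
    by rewrite /Q /W exprSr mulrA -natr1 mulrDl mul1r.
  rewrite !FcWgg; apply: step_alg.
    have e0 : (n - k.+1 + k = n.-1)%N by lia.
    move: (hR j); rewrite e0.
    have e1 : j.+1%:R * (1 - p) = (n.-1%:R - j%:R) * p.
      rewrite /p; have en : n = n.-1.+1 by lia.
      by move: (e1_lem j n.-1); rewrite -en.
    rewrite e1 => h.
    have hpos : 0 < (n.-1%:R - j%:R) * p.
      apply: mulr_gt0; first by rewrite subr_gt0 ltr_nat; lia.
      by rewrite /p divr_gt0 // ltr0n; lia.
    by rewrite -(ler_pM2l hpos).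
  have -> : (k%:R * (p - p') + (p - p')) * p' - k%:R * (p - p') * p =
     (p - p') * (p' - k%:R * (p - p')) by ring.
  have -> : p' - k%:R * (p - p') = (n%:R - k%:R) * (p - p') by rewrite -{1}he; ring.
  apply: mulr_ge0; first by rewrite subr_ge0.
  by apply: mulr_ge0; rewrite subr_ge0 // ler_nat ltnW.
have all : forall k, (k <= n)%N -> Fc j.+2 (Q k) <= Fc j.+2 (Q 0).
  elim=> // k IH hk; exact: le_trans (step k hk) (IH (ltnW hk)).
have := all n (leqnn n).
have g0 : g 0 = 1 by rewrite /g subr0 mul0r addr0.
by rewrite /Q subnn subn0 !expr0 mul0r g0 mulr1 mul1r he -exprSr mulr1.
Qed.

Lemma chainN j d : (0 < j)%N ->
  Fc j.+1 (g (j%:R / (j.+1 + d)%:R) ^+ (j.+1 + d)) <= Fc j.+1 (g (j%:R / j.+1%:R) ^+ j.+1).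
Proof.
move=> j0; elim: d => [|d IH]; first by rewrite addn0.
apply: le_trans IH; rewrite addnS; apply: chain1; rewrite j0 /=; lia.
Qed.

Lemma gX_high a n i : (n < i)%N -> (g a ^+ n)`_i = 0.
Proof.
elim: n i => [|n IH] i hi.
  by rewrite expr0 coef1; case: i hi.
rewrite exprSr coef_g; case: i hi => [|i] // hi.
by rewrite !IH // ?mulr0 ?add0r // ltnW.
Qed.

Lemma gX_top a n : (g a ^+ n)`_n = a ^+ n.
Proof.
elim: n => [|n IH]; first by rewrite expr0 coef1.
by rewrite exprSr coef_g IH gX_high // mulr0 add0r exprSr mulrC.
Qed.

Lemma gX_total a n : Fc n.+1 (g a ^+ n) = 1.
Proof.
elim: n => [|n IH]; first by rewrite FcS Fc0 expr0 coef1 add0r.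
by rewrite exprSr Fc_g FcS IH gX_high // mulr0 !subr0 addr0.
Qed.

Lemma gX_Fc a n : Fc n (g a ^+ n) = 1 - a ^+ n.
Proof. by rewrite -(gX_total a n) FcS gX_top addrK. Qed.

Lemma gX_pos a n i : 0 < a < 1 -> (i <= n)%N -> 0 < (g a ^+ n)`_i.
Proof.
move=> /andP[a0 a1]; elim: n i => [|n IH] i hi.
  by case: i hi => // _; rewrite expr0 coef1.
have hn : nonneg (g a ^+ n) by apply: nonneg_gX; rewrite ltW // ltW.
rewrite exprSr coef_g; case: i hi => [|i] hi.
  by rewrite addr0; apply: mulr_gt0; [rewrite subr_gt0 | exact: IH].
case: (leqP i.+1 n) => hin.
  apply: ltr_pwDl; first by apply: mulr_gt0; [rewrite subr_gt0 | exact: IH].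
  by apply: mulr_ge0 => //; exact: ltW.
rewrite gX_high // mulr0 add0r; apply: mulr_gt0 => //; apply: IH; lia.
Qed.
Definition Zs N (b : {ffun 'I_N -> bool}) : nat := \sum_(i < N) (~~ b i : nat).

Lemma sum_ind (c z : nat) : \sum_(i < c) (((i : nat) == z)%:R : R) = ((z < c)%N)%:R.
Proof.
elim: c => [|c IH]; first by rewrite big_ord0.
rewrite big_ord_recr /= IH ltnS.
case: ltngtP => h /=.
- by rewrite addr0.
- by rewrite addr0.
- by rewrite add0r.
Qed.

Lemma total N (q : 'I_N -> R) : \sum_(b : {ffun 'I_N -> bool}) bern_weight q b = 1.
Proof.
have := bigA_distr_bigA (fun (i : 'I_N) (x : bool) => if x then q i else 1 - q i).
rewrite /bern_weight => <-.
rewrite (eq_bigr (fun _ => 1)) ?big1 // => i _.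
by rewrite big_bool /= addrC subrK.
Qed.

Lemma prob_poly N (q : 'I_N -> R) c :
  bern_prob q (fun b => (Zs b < c)%N) = Fc c (\prod_(i < N) g (1 - q i)).
Proof.
have e1 : \prod_(i < N) g (1 - q i) =
   \prod_(i < N) \sum_(x : bool) (if x then (q i)%:P else (1 - q i)%:P * 'X).
  apply: eq_bigr => i _; rewrite big_bool /= /g.
  congr (_ + _); congr (_%:P); ring.
rewrite e1 bigA_distr_bigA /=.
have e2 : forall f : {ffun 'I_N -> bool},
  \prod_(i < N) (if f i then (q i)%:P else (1 - q i)%:P * 'X) =
  (bern_weight q f)%:P * 'X^(Zs f).
  move=> f.
  rewrite (eq_bigr (fun i => (if f i then q i else 1 - q i)%:P * 'X^(~~ f i))); last first.
    by move=> i _; case: (f i); rewrite /= ?expr0 ?mulr1 ?expr1.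
  by rewrite big_split /= prodrXr /bern_weight /Zs rmorph_prod.
rewrite (eq_bigr _ (fun f _ => e2 f)).
rewrite /Fc /bern_prob.
under [RHS]eq_bigr do rewrite coef_sum.
rewrite exchange_big /= [LHS]big_mkcond /=.
apply: eq_bigr => f _.
under eq_bigr do rewrite coefCM coefXn.
rewrite -mulr_sumr sum_ind.
by case: (Zs f < c)%N; rewrite ?mulr1 ?mulr0.
Qed.

Lemma floor_ex (n : nat) (x : R) : 0 <= x -> x < n%:R -> exists j : nat, j%:R <= x < j.+1%:R.
Proof.
elim: n => [|n IH] x0 xn; first by move: (le_lt_trans x0 xn); rewrite ltxx.
case: (lerP n%:R x) => h; first by exists n; rewrite h xn.
exact: IH.
Qed.

Lemma sumSZ N (b : {ffun 'I_N -> bool}) : (bern_sum b + Zs b)%N = N.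
Proof.
rewrite /bern_sum /Zs -big_split /=.
rewrite (eq_bigr (fun _ => 1%N)); last by move=> i _; case: (b i).
by rewrite sum1_card card_ord.
Qed.

Lemma base_ineq (j : nat) : (0 < j)%N ->
  4^-1 <= (j%:R / j.+1%:R) ^+ j.+1 :> R /\ ((1 < j)%N -> 4^-1 < (j%:R / j.+1%:R) ^+ j.+1 :> R).
Proof.
move=> j0; have [h1 h2] := bern_nat j0.
have v0 : 0 < (j.+1 ^ j.+1)%:R :> R by rewrite ltr0n expn_gt0.
rewrite expr_div_n -!natrX.
split.
  rewrite ler_pdivlMr //.
  have : (j.+1 ^ j.+1)%:R <= 4 * (j ^ j.+1)%:R :> R.
    by rewrite -[4]/(4%:R) -natrM ler_nat.
  lra.
move=> /h2 h3; rewrite ltr_pdivlMr //.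
have : (j.+1 ^ j.+1)%:R < 4 * (j ^ j.+1)%:R :> R.
  by rewrite -[4]/(4%:R) -natrM ltr_nat.
lra.
Qed.
End Poly.

Theorem corollary1 (R : realFieldType) (N : nat) (q : 'I_N -> R) :
  (0 < N)%N ->
  (forall i, 0 < q i < 1) ->
  qmax q < 1 - N%:R^-1 ->
  bern_prob q (fun b => (bern_sum b)%:R < N%:R * qmax q) > 4^-1.
Proof.
move=> N0 hq hp.
set p := qmax q in hp *.
have hqp : forall i, q i <= p by move=> i; rewrite /p /qmax; exact: le_bigmax.
have p0 : 0 < p.
  move: hqp hq; rewrite /p; case: N q N0 {hp p} => [|N'] // q _ hqp hq.
  by case/andP: (hq ord0) => h _; exact: lt_le_trans h (hqp ord0).
have Nr0 : 0 < N%:R :> R by rewrite ltr0n.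
set r := 1 - p.
have hr1 : N%:R^-1 < r by rewrite /r; lra.
have hr0 : 0 < r by apply: lt_trans hr1; rewrite invr_gt0.
have hr : r < 1 by rewrite /r; lra.
set x := N%:R * r.
have x1 : 1 < x.
  have h : N%:R * N%:R^-1 < N%:R * r by rewrite ltr_pM2l.
  by rewrite mulfV ?lt0r_neq0 in h.
have xN : x < N%:R.
  have h : N%:R * r < N%:R * 1 by rewrite ltr_pM2l.
  by rewrite mulr1 in h.
have [j /andP[jx xj]] := floor_ex (ltW (lt_trans ltr01 x1)) xN.
have j0 : (0 < j)%N.
  rewrite lt0n; apply/negP => /eqP j0; move: xj; rewrite j0.
  by move=> h; move: (lt_trans x1 h); rewrite ltxx.
have jN : (j < N)%N by rewrite -(ltr_nat R); exact: le_lt_trans jx xN.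
have ev : bern_prob q (fun b => (bern_sum b)%:R < N%:R * p) =
          bern_prob q (fun b => ~~ (Zs b < j.+1)%N).
  rewrite /bern_prob; apply: eq_bigl => b.
  have e := sumSZ b.
  have -> : (bern_sum b)%:R = N%:R - (Zs b)%:R :> R by rewrite -[in N%:R]e natrD addrK.
  have -> : N%:R * p = N%:R - x by rewrite /x /r; ring.
  rewrite ltrD2l ltrN2 -leqNgt.
  apply/idP/idP => h.
    by rewrite -(ltr_nat R); exact: le_lt_trans jx h.
  by apply: lt_le_trans xj _; rewrite ler_nat.
rewrite ev.
have tot := total q.
rewrite (bigID (fun b => (Zs b < j.+1)%N)) /= in tot.
have -> : bern_prob q (fun b => ~~ (Zs b < j.+1)%N) =
   1 - bern_prob q (fun b => (Zs b < j.+1)%N) by rewrite -tot /bern_prob addrC addrK.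
rewrite prob_poly.
have h1 : Fc j.+1 (\prod_(i < N) g (1 - q i)) <= Fc j.+1 (g r ^+ N).
  have := @dom R N j.+1 r (ltW hr0) (fun i => 1 - q i) 1 (@nonneg1 R).
  rewrite !mul1r; apply => i.
  case/andP: (hq i) => qi0 qi1; rewrite /r lerD2l lerN2 hqp /=; lra.
pose a : R := j%:R / N%:R.
have a0 : 0 <= a by rewrite /a divr_ge0 // ler0n.
have ar : a <= r by rewrite /a ler_pdivrMr // mulrC.
have gr : \prod_(i < N) g r = g r ^+ N by rewrite prodr_const card_ord.
have h2 : Fc j.+1 (g r ^+ N) <= Fc j.+1 (g a ^+ N).
  have := @dom R N j.+1 a a0 (fun _ => r) 1 (@nonneg1 R).
  rewrite !mul1r gr; apply => i; rewrite ar (ltW hr).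
  done.
have h3 : Fc j.+1 (g a ^+ N) <= 1 - (j%:R / j.+1%:R) ^+ j.+1.
  have := chainN R (N - j.+1) j0; rewrite subnKC // gX_Fc.
  done.
have [b1 b2] := base_ineq R j0.
case: (ltnP 1 j) => hj.
  have H := le_trans h1 (le_trans h2 h3); have hb := b2 hj; clear -H hb; lra.
have ej : j = 1%N by apply/eqP; rewrite eqn_leq hj j0.
have ar' : a < r.
  rewrite /a ltr_pdivrMr // mulrC -/x; apply: le_lt_trans x1; rewrite ej.
  done.
have h4 : Fc j.+1 (g r ^+ N) < Fc j.+1 (g a ^+ N).
  have eN : N = N.-1.+1 by rewrite prednK.
  have er : g r ^+ N = g r ^+ N.-1 * g r by rewrite -exprSr -eN.
  have ea : g a ^+ N = g a * g a ^+ N.-1 by rewrite -exprS -eN.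
  rewrite er ea.
  have hpos : 0 < (g r ^+ N.-1)`_j.
    apply: gX_pos; first by rewrite hr0 hr.
    by rewrite -ltnS prednK.
  apply: (lt_le_trans (dom_strict hpos ar')).
  rewrite mulrC.
  have a1 : 0 <= a <= 1 by rewrite a0 (le_trans ar) // ltW.
  have ga : nonneg (g a) by rewrite -[g a]mul1r; apply: nonneg_g => //; exact: nonneg1.
  have := @dom R N.-1 j.+1 a a0 (fun _ => r) (g a) ga.
  rewrite prodr_const card_ord -exprS; apply.
  by move=> _; rewrite ar (ltW hr).
have H := le_lt_trans h1 (lt_le_trans h4 h3); clear -H b1; lra.
Qed.
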